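(* Let $W\in C^1(\mathbb{R}\setminus\{0\})$ satisfy $W''=-\delta_0+w$ in the distributional sense, where $\delta_0$ is the Dirac mass at $0$, $w\in C_b(\mathbb{R})$ and $\|w\|_{L^1(\mathbb{R})}=w_0<\infty$. Let $a\in C^1(\mathbb{R})$ satisfy $0\le a'(x)\le \alpha$ for all $x\in\mathbb{R}$, and let $A$ be the antiderivative of $a$ with $A(0)=0$. Let $\rho^{ini}\in\mathcal{P}_1(\mathbb{R})$ be nonnegative and compactly supported, with total mass $M=|\rho^{ini}|(\mathbb{R})$, and set $c:=\max_{x\in[-M(1+w_0),M(1+w_0)]}|a(x)|$. Consider a uniform grid $x_i=x_0+i\,\delta x$, $i=0,\dots,N_x$, with $\mathrm{supp}(\rho^{ini})\subset[x_0,x_{N_x}]$, time step $\delta t$, and $\lambda=\delta t/\delta x$. Set $\rho_i^0=\frac{1}{\delta x}\int_{[x_i,x_{i+1})}\rho^{ini}(dx)$, and for $n\ge 0$ define the sequences by the following scheme, with the boundary conventions $\rho_0^n=S_0^n=S_1^n=J_{-1/2}^n=0$ and $\rho_{N_x}^n=S_{N_x}^n=J_{N_x+1/2}^n=0$: \begin{itemize} \item $\nu_i^n=\sum_{k=1}^{N_x}\rho_k^n w_{ki}$ with $w_{ki}=\int_{(i-1-k)\delta x}^{(i-k)\delta x}w(z)\,dz$; \item $-\dfrac{S_{i+1}^n-2S_i^n+S_{i-1}^n}{\delta x^2}+\nu_i^n=\rho_i^n$; \item $\partial_xS_{i+1}^n=\dfrac{S_{i+2}^n-S_i^n}{2\delta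 x}$; \item $a_{i+1/2}^n=0$ if $\partial_xS_{i+1}^n=\partial_xS_i^n$, and $a_{i+1/2}^n=\dfrac{A(\partial_xS_{i+1}^n)-A(\partial_xS_i^n)}{\partial_xS_{i+1}^n-\partial_xS_i^n}$ otherwise; \item $J_{i+1/2}^n=-\dfrac{A(\partial_xS_{i+1}^n)-A(\partial_xS_i^n)}{\delta x}+a_{i+1/2}^n\dfrac{\nu_{i+1}^n+\nu_i^n}{2}$; \item $\rho_i^{n+1}=\rho_i^n-\dfrac{\lambda}{2}\big(J_{i+1/2}^n-J_{i-1/2}^n\big)+\dfrac{\lambda}{2}c\big(\rho_{i+1}^n-2\rho_i^n+\rho_{i-1}^n\big)$. \end{itemize} Assume the CFL condition $\lambda=\dfrac{\delta t}{\delta x}\le\dfrac{2}{3c}$. Then for all $i$ and all $n\in\mathbb{N}$, $$\rho_i^n\ge 0,\qquad |a_{i+1/2}^n|\le c.$$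
   Context: $\mathcal{P}_1(\mathbb{R})$ denotes the set of nonnegative bounded Radon measures $\mu$ on $\mathbb{R}$ with $\int_{\mathbb{R}}|x|\,d\mu(x)<\infty$. The scheme is a Lax–Friedrichs type discretization of the aggregation equation $\partial_t\rho+\partial_x(a(W'*\rho)\rho)=0$, where $S_i^n$ approximates $W*\rho$ and $\nu_i^n$ approximates $w*\rho$ at $(t_n,x_i)$, $t_n=n\delta t$. *)

(* Defs.v *)
From HB Require Import structures.
From mathcomp Require Import all_boot all_order all_algebra.
From mathcomp Require Import all_classical all_reals all_analysis.
Set Implicit Arguments. Unset Strict Implicit. Unset Printing Implicit Defensive.
Import Order.TTheory GRing.Theory Num.Theory.
Import numFieldNormedType.Exports.
Local Open Scope classical_set_scope.
Local Open Scope ring_scope.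

Definition gridpt (R : realType) (x0 dx : R) (i : int) : R := x0 + i%:~R * dx.

Definition wki (R : realType) (w : R -> R) (dx : R) (k i : int) : R :=
  \int[@lebesgue_measure R]_(z in `[((i - 1 - k)%:~R * dx), ((i - k)%:~R * dx)])
     w z.

(* Main.v *)
Require Import Defs.
From HB Require Import structures.
From mathcomp Require Import all_boot all_order all_algebra.
From mathcomp Require Import all_classical all_reals all_analysis.
From mathcomp Require Import lra ring zify.
Import Order.TTheory GRing.Theory Num.Theory.
Import numFieldNormedType.Exports.
Local Open Scope classical_set_scope.
Local Open Scope ring_scope.
Set Implicit Arguments. Unset Strict Implicit.

Lemma avg_bound (R : realType) (a A : R -> R) (K c : R) :
  (forall x : R, is_derive x (1:R) A (a x)) ->
  (forall x, `|x| <= K -> `|a x| <= c) ->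
  forall p q, `|p| <= K -> `|q| <= K -> p != q ->
  `|(A p - A q) / (p - q)| <= c.
Proof.
move=> hA hc.
have dA : forall x, derivable A x 1 by move=> x; exact: ex_derive.
have key : forall p q, `|p| <= K -> `|q| <= K -> q < p ->
    `|(A p - A q) / (p - q)| <= c.
  move=> p q hp hq qp.
  have [x /[!in_itv] /= /andP[qx xp] ->] := @MVT R A a q p qp (fun x _ => hA x)
    (derivable_within_continuous (fun x _ => dA x)).
  rewrite mulfK ?subr_eq0 ?gt_eqF //; apply: hc.
  rewrite ler_norml; move: hp hq; rewrite !ler_norml => /andP[? ?] /andP[? ?].
  apply/andP; split; lra.
move=> p q hp hq; rewrite neq_lt => /orP[pq|qp]; last exact: key.
have -> : (A p - A q) / (p - q) = (A q - A p) / (q - p) by rewrite -opprB -(opprB q) invrN mulrNN.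
exact: key.
Qed.

Lemma itv_split (R : realType) (g : R -> R) (L u v : R) :
  (@lebesgue_measure R).-integrable setT (EFin \o g) ->
  L <= u -> u <= v ->
  \int[@lebesgue_measure R]_(x in `[u, v]) g x =
  \int[@lebesgue_measure R]_(x in `[L, v]) g x -
  \int[@lebesgue_measure R]_(x in `[L, u]) g x.
Proof.
move=> hg Lu uv.
rewrite (@Rintegral_itvB R g (BLeft L) (BRight v) u) //.
- rewrite Rintegral_itv_obnd_cbnd //; exact: integrableS hg.
- exact: integrableS hg.
Qed.

Lemma wsum (R : realType) (w : R -> R) (dx : R) (k : int) (N : nat) :
  0 < dx ->
  (@lebesgue_measure R).-integrable setT (EFin \o w) ->
  \sum_(0 <= j < N) `|wki w dx k j%:Z| <= \int[@lebesgue_measure R]_z `|w z|.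
Proof.
move=> hdx hw.
have hg : (@lebesgue_measure R).-integrable setT (EFin \o (fun x => `|w x|)).
  exact: integrable_norm.
set L := ((-1 - k)%:~R * dx).
pose t (j : nat) := ((j%:Z - 1 - k)%:~R * dx).
pose F (v : R) := \int[@lebesgue_measure R]_(x in `[L, v]) `|w x|.
have tL : forall j, L <= t j.
  move=> j; rewrite /L /t ler_pM2r // ler_int; lia.
have tS : forall j : nat, t j <= t j.+1.
  move=> j; rewrite /t ler_pM2r // ler_int; lia.
have tS' : forall j : nat, ((j%:Z - k)%:~R * dx) = t j.+1.
  move=> j; rewrite /t; congr (_%:~R * _); lia.
apply: (@le_trans _ _ (\sum_(0 <= j < N) (F (t j.+1) - F (t j)))).
  apply: ler_sum => j _.
  rewrite /wki tS'.
  apply: le_trans; first apply: le_normr_Rintegral => //.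
    exact: integrableS hw.
  rewrite /F -(@itv_split R _ L _ _ hg) //.
rewrite telescope_sumr // ; apply: (@le_trans _ _ (F (t N))).
  rewrite lerBlDr lerDl; apply: Rintegral_ge0 => x _; exact: normr_ge0.
rewrite /F /Rintegral; apply: fine_le.
- exact: integrable_fin_num (integrableS _ _ _ hg).
- exact: integrable_fin_num hg.
apply: ge0_subset_integral => //.
- by case/integrableP: hg.
Qed.

Lemma S_eq (R : realType) (Nx : nat) (dx : R) (S nu rho : int -> R) :
  dx != 0 ->
  (forall i : int, (0 <= i <= Nx%:Z)%R ->
     - (S (i + 1) - 2 * S i + S (i - 1)) / dx ^+ 2 + nu i = rho i) ->
  forall i : int, (0 <= i <= Nx%:Z)%R ->
     S (i + 1) - 2 * S i + S (i - 1) = dx ^+ 2 * (nu i - rho i).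
Proof.
move=> dx0 hS i hi; rewrite -(hS i hi); field.
exact: dx0.
Qed.

Lemma dS_bound (R : realType) (Nx : nat) (dx : R) (S nu rho dS : int -> R) :
  0 < dx -> S 0 = 0 -> S 1 = 0 ->
  (forall i : int, (0 <= i <= Nx%:Z)%R ->
     S (i + 1) - 2 * S i + S (i - 1) = dx ^+ 2 * (nu i - rho i)) ->
  (forall i : int, (0 <= i <= Nx%:Z)%R ->
     dS i = (S (i + 1) - S (i - 1)) / (2 * dx)) ->
  forall i : int, (0 <= i <= Nx%:Z)%R ->
  `|dS i| <= dx * \sum_(0 <= j < Nx.+1) `|nu j%:Z - rho j%:Z|.
Proof.
move=> hdx hS0 hS1 hSeq hdS.
set E := \sum_(0 <= j < Nx.+1) _.
pose D (j : int) := S (j + 1) - S j.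
have hrec : forall j : int, (0 <= j <= Nx%:Z)%R ->
    D j = D (j - 1) + dx ^+ 2 * (nu j - rho j).
  move=> j hj; rewrite /D subrK; have := hSeq j hj; lra.
have hD0 : D 0 = 0 by rewrite /D add0r hS1 hS0 subrr.
have hsum : forall m : nat, (m <= Nx)%N ->
    D m%:Z = dx ^+ 2 * \sum_(1 <= j < m.+1) (nu j%:Z - rho j%:Z).
  elim=> [|m IH] hm; first by rewrite big_geq // mulr0 hD0.
  rewrite big_nat_recr //= mulrDr -IH; last by lia.
  rewrite hrec; last by apply/andP; split; lia.
  by have -> : (m.+1)%:Z - 1 = m%:Z by lia.
have hm1 : D (-1) = - (dx ^+ 2 * (nu 0 - rho 0)).
  have h0 : (0 <= (0:int) <= Nx%:Z)%R by apply/andP; split; lia.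
  have := hrec 0 h0; rewrite sub0r hD0; lra.
have E0 : 0 <= \sum_(1 <= j < Nx.+1) `|nu j%:Z - rho j%:Z|.
  by apply: sumr_ge0 => j _.
have hE : E = `|nu 0 - rho 0| + \sum_(1 <= j < Nx.+1) `|nu j%:Z - rho j%:Z|.
  by rewrite /E big_ltn.
have dx2 : 0 <= dx ^+ 2 by rewrite exprn_ge0 // ltW.
have hb : forall j : int, (-1 <= j <= Nx%:Z)%R -> `|D j| <= dx ^+ 2 * E.
  case=> [m|m] hj.
  - have hm : (m <= Nx)%N by lia.
    rewrite hsum // normrM ger0_norm // ler_wpM2l //.
    apply: le_trans; first exact: ler_norm_sum.
    rewrite hE (@big_cat_nat _ _ _ m.+1 1 Nx.+1) //=; try lia.
    have : 0 <= \sum_(m.+1 <= i < Nx.+1) `|nu i%:Z - rho i%:Z| by apply: sumr_ge0.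
    have : 0 <= `|nu 0 - rho 0| by [].
    lra.
  - have -> : Negz m = -1 by lia.
    rewrite hm1 normrN normrM ger0_norm // ler_wpM2l // hE.
    by rewrite lerDl.
move=> i hi.
have -> : dS i = (D i + D (i - 1)) / (2 * dx).
  by rewrite hdS // /D subrK; congr (_ / _); lra.
have h2 : 0 < 2 * dx by lra.
rewrite normrM normfV (gtr0_norm h2) ler_pdivrMr //.
have -> : dx * E * (2 * dx) = 2 * (dx ^+ 2 * E) by ring.
have := hb i; have := hb (i - 1).
have := ler_normD (D i) (D (i - 1)).
move: hi => /andP [hi1 hi2].
have h1 : (-1 <= i <= Nx%:Z)%R by apply/andP; split; lia.
have h3 : (-1 <= i - 1 <= Nx%:Z)%R by apply/andP; split; lia.
move=> ? /(_ h3) ? /(_ h1) ?; lra.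
Qed.

Lemma nu_bound (R : realType) (Nx : nat) (w0 : R) (nu rho : int -> R) (W : int -> int -> R) :
  (forall i : int, nu i = \sum_(1 <= k < Nx.+1) rho k%:Z * W k%:Z i) ->
  (forall k : nat, (1 <= k <= Nx)%N -> 0 <= rho k%:Z) ->
  (forall k : nat, \sum_(0 <= j < Nx.+1) `|W k%:Z j%:Z| <= w0) ->
  \sum_(0 <= j < Nx.+1) `|nu j%:Z| <= (\sum_(1 <= k < Nx.+1) rho k%:Z) * w0.
Proof.
move=> hnu hr hW.
apply: (@le_trans _ _ (\sum_(0 <= j < Nx.+1) \sum_(1 <= k < Nx.+1) rho k%:Z * `|W k%:Z j%:Z|)).
  apply: ler_sum => j _; rewrite hnu.
  apply: le_trans; first exact: ler_norm_sum.
  rewrite big_nat_cond [X in _ <= X]big_nat_cond.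
  apply: ler_sum => k /andP[hk _]; rewrite normrM ger0_norm //; apply: hr; lia.
rewrite exchange_big_nat /= mulr_suml.
rewrite big_nat_cond [X in _ <= X]big_nat_cond.
apply: ler_sum => k /andP[hk _].
rewrite -mulr_sumr ler_wpM2l //; first by apply: hr; lia.
Qed.

Lemma J_formula (R : realType) (Nx : nat) (dx : R) (A : R -> R)
   (S nu rho dS an J : int -> R) :
  0 < dx ->
  (forall i : int, (0 <= i <= Nx%:Z)%R ->
     S (i + 1) - 2 * S i + S (i - 1) = dx ^+ 2 * (nu i - rho i)) ->
  (forall i : int, (0 <= i <= Nx%:Z)%R ->
     dS i = (S (i + 1) - S (i - 1)) / (2 * dx)) ->
  (forall i : int, (0 <= i < Nx%:Z)%R ->
     an i = if dS (i + 1) == dS i then 0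
              else (A (dS (i + 1)) - A (dS i)) / (dS (i + 1) - dS i)) ->
  (forall i : int, (0 <= i < Nx%:Z)%R ->
     J i = - (A (dS (i + 1)) - A (dS i)) / dx
             + an i * ((nu (i + 1) + nu i) / 2)) ->
  forall i : int, (0 <= i < Nx%:Z)%R ->
    J i = an i * (rho (i + 1) + rho i) / 2.
Proof.
move=> hdx hSeq hdS ha hJ i hi.
have hi0 : (0 <= i <= Nx%:Z)%R by apply/andP; split; lia.
have hi1 : (0 <= i + 1 <= Nx%:Z)%R by apply/andP; split; lia.
have hA : A (dS (i + 1)) - A (dS i) = an i * (dS (i + 1) - dS i).
  rewrite ha //; case: ifP => [/eqP ->|/negbT hne]; first by rewrite !subrr mulr0.
  by rewrite divfK // subr_eq0.
have hd : dS (i + 1) - dS i = dx * ((nu (i + 1) - rho (i + 1)) + (nu i - rho i)) / 2.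
  rewrite !hdS // addrK.
  have e1 := hSeq _ hi0; have e2 := hSeq _ hi1; rewrite addrK in e2.
  have dx0 : dx != 0 by rewrite gt_eqF.
  apply: (@mulIf _ (2 * dx)); first by rewrite mulf_neq0 // pnatr_eq0.
  rewrite mulrBl !divfK ?mulf_neq0 ?pnatr_eq0 //.
  have -> : dx * (nu (i + 1) - rho (i + 1) + (nu i - rho i)) / 2 * (2 * dx)
     = dx ^+ 2 * (nu (i + 1) - rho (i + 1)) + dx ^+ 2 * (nu i - rho i) by field.
  rewrite -e1 -e2; ring.
rewrite hJ // hA hd; field; by rewrite gt_eqF.
Qed.

Lemma base_mass (R : realType) (mu : {finite_measure set R -> \bar R}) (x0 dx : R) (N : nat) :
  0 < dx ->
  \sum_(1 <= k < N) fine (mu [set` `[gridpt x0 dx k%:Z, gridpt x0 dx (k%:Z + 1)[]) <= fine (mu setT).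
Proof.
move=> hdx.
pose g (k : nat) := gridpt x0 dx k%:Z.
have gS : forall k : nat, gridpt x0 dx (k%:Z + 1) = g k.+1.
  by move=> k; rewrite /g; congr gridpt; lia.
have gle : forall k m : nat, (k <= m)%N -> g k <= g m.
  by move=> k m km; rewrite /g /gridpt lerD2l ler_pM2r // ler_int; lia.
have claim : forall m : nat, (1 <= m)%N ->
    \sum_(1 <= k < m) fine (mu [set` `[gridpt x0 dx k%:Z, gridpt x0 dx (k%:Z + 1)[])
    = fine (mu [set` `[g 1, g m[]).
  elim=> [//|m IH] hm.
  case: (posnP m) => [m0|mpos].
    by rewrite m0 big_geq // set_itvco0 measure0.
  rewrite big_nat_recr //= IH // gS.
  rewrite (@itv_bndbnd_setU _ _ (BLeft (g 1)) (BLeft (g m)) (BLeft (g m.+1))); last 2 first.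
  - by rewrite bnd_simp gle.
  - by rewrite bnd_simp gle.
  rewrite measureU //; last first.
    rewrite -subset0 => x [] /=; rewrite !in_itv /= => /andP[_ h1] /andP[h2 _].
    by move: (lt_le_trans h1 h2); rewrite ltxx.
  rewrite fineD //; exact: fin_num_measure.
case: N => [|N]; first by rewrite big_geq // fine_ge0 // measure_ge0.
case: N => [|N]; first by rewrite big_geq // fine_ge0 // measure_ge0.
rewrite claim //; apply: fine_le; try exact: fin_num_measure.
by apply: le_measure => //; rewrite inE.
Qed.

Unset Implicit Arguments. Set Strict Implicit.
Theorem lemma2p3 (R : realType)
  (* the kernel part w : continuous, bounded, L^1 with norm w0 *)
  (w : R -> R) (w0 : R)
  (hw_cont : continuous w)
  (hw_bdd : exists B : R, forall x, `|w x| <= B)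
  (hw_int : (@lebesgue_measure R).-integrable setT (EFin \o w))
  (hw0 : w0 = \int[@lebesgue_measure R]_z `|w z|)
  (* the velocity field a, C^1 with 0 <= a' <= alpha; A antiderivative, A 0 = 0 *)
  (a A : R -> R) (alpha : R)
  (ha_der : forall x, derivable a x 1)
  (ha_C1 : continuous (derive1 a))
  (ha'_ge0 : forall x, 0 <= derive1 a x)
  (ha'_le : forall x, derive1 a x <= alpha)
  (hA : forall x : R, is_derive x (1 : R) A (a x))
  (hA0 : A 0 = 0)
  (* initial datum : nonnegative finite Borel measure with finite first moment *)
  (mu : {finite_measure set R -> \bar R})
  (hmu_P1 : mu.-integrable setT (fun x => (`|x|)%:E))
  (* grid *)
  (Nx : nat) (x0 dx dt : R)
  (hdx : 0 < dx) (hdt : 0 < dt)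
  (hsupp : mu (~` [set` `[x0, gridpt x0 dx Nx%:Z]]) = 0%E)
  (* c = max_{|x| <= M (1 + w0)} |a x|, with M the total mass *)
  (c : R)
  (hc_ub : forall x, `|x| <= fine (mu setT) * (1 + w0) -> `|a x| <= c)
  (hc_att : exists2 x, `|x| <= fine (mu setT) * (1 + w0) & `|a x| = c)
  (* CFL condition  dt/dx <= 2/(3c)  (read as +oo when c = 0) *)
  (hCFL : 3 * c * (dt / dx) <= 2)
  (* the scheme: time index n : nat, space index i : int;
     a n i stands for a_{i+1/2}^n, J n i for J_{i+1/2}^n *)
  (rho nu S dS an J : nat -> int -> R)
  (h_rho0 : forall i : int, (1 <= i < Nx%:Z)%R ->
     rho 0%N i = fine (mu [set` `[gridpt x0 dx i, gridpt x0 dx (i + 1)[]) / dx)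
  (h_rhoL : forall n, rho n 0 = 0)
  (h_rhoR : forall n, rho n Nx%:Z = 0)
  (h_nu : forall n (i : int),
     nu n i = \sum_(1 <= k < Nx.+1) rho n k%:Z * wki w dx k%:Z i)
  (h_S0 : forall n, S n 0 = 0)
  (h_S1 : forall n, S n 1 = 0)
  (h_S : forall n (i : int), (0 <= i <= Nx%:Z)%R ->
     - (S n (i + 1) - 2 * S n i + S n (i - 1)) / dx ^+ 2 + nu n i = rho n i)
  (h_dS : forall n (i : int), (0 <= i <= Nx%:Z)%R ->
     dS n i = (S n (i + 1) - S n (i - 1)) / (2 * dx))
  (h_a : forall n (i : int), (0 <= i < Nx%:Z)%R ->
     an n i = if dS n (i + 1) == dS n i then 0
              else (A (dS n (i + 1)) - A (dS n i)) / (dS n (i + 1) - dS n i))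
  (h_J : forall n (i : int), (0 <= i < Nx%:Z)%R ->
     J n i = - (A (dS n (i + 1)) - A (dS n i)) / dx
             + an n i * ((nu n (i + 1) + nu n i) / 2))
  (h_JL : forall n, J n (-1) = 0)
  (h_JR : forall n, J n Nx%:Z = 0)
  (h_upd : forall n (i : int), (1 <= i < Nx%:Z)%R ->
     rho n.+1 i = rho n i - (dt / dx) / 2 * (J n i - J n (i - 1))
                  + (dt / dx) / 2 * c * (rho n (i + 1) - 2 * rho n i + rho n (i - 1))) :
  forall (n : nat) (i : int),
    ((0 <= i <= Nx%:Z)%R -> 0 <= rho n i) /\
    ((0 <= i < Nx%:Z)%R -> `|an n i| <= c).
Proof.
have dx0 : dx != 0 by rewrite gt_eqF.
have hSeq := fun n => S_eq dx0 (h_S n).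
have hJf : forall n (i : int), (0 <= i < Nx%:Z)%R ->
    J n i = an n i * (rho n (i + 1) + rho n i) / 2.
  move=> n; exact: (J_formula hdx (hSeq n) (h_dS n) (h_a n) (h_J n)).
have w0ge : 0 <= w0 by rewrite hw0; apply: Rintegral_ge0 => x _.
have hWs : forall k : nat, \sum_(0 <= j < Nx.+1) `|wki w dx k%:Z j%:Z| <= w0.
  by move=> k; rewrite hw0; apply: wsum.
have c0 : 0 <= c by case: hc_att => x _ <-.
set M := fine (mu setT).
have M0 : 0 <= M by rewrite fine_ge0 // measure_ge0.
pose P n := (forall i : int, (0 <= i <= Nx%:Z)%R -> 0 <= rho n i) /\
            dx * \sum_(1 <= k < Nx.+1) rho n k%:Z <= M.
have hanb : forall n, P n -> forall i : int, (0 <= i < Nx%:Z)%R -> `|an n i| <= c.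
  move=> n [hp hm].
  have hdSb : forall j : int, (0 <= j <= Nx%:Z)%R -> `|dS n j| <= M * (1 + w0).
    move=> j hj.
    have hh := dS_bound hdx (h_S0 n) (h_S1 n) (hSeq n) (h_dS n) hj.
    apply: le_trans hh _.
    set s := \sum_(1 <= k < Nx.+1) rho n k%:Z.
    have hnu : \sum_(0 <= j < Nx.+1) `|nu n j%:Z| <= s * w0.
      apply: nu_bound (h_nu n) _ hWs => k hk; apply: hp; apply/andP; split; clear -hk; lia.
    have hr : \sum_(0 <= j < Nx.+1) `|rho n j%:Z| = s.
      rewrite big_ltn // h_rhoL normr0 add0r /s.
      rewrite big_nat_cond [X in _ = X]big_nat_cond.
      apply: eq_bigr => k /andP[hk _]; rewrite ger0_norm //; apply: hp.
      apply/andP; split; clear -hk; lia.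
    have hle : \sum_(0 <= j < Nx.+1) `|nu n j%:Z - rho n j%:Z| <= s * w0 + s.
      rewrite -[X in _ <= _ + X]hr; apply: le_trans _ (lerD hnu (lexx _)).
      rewrite -big_split /=; apply: ler_sum => k _; exact: ler_normB.
    apply: (@le_trans _ _ (dx * (s * w0 + s))).
      by rewrite ler_wpM2l // ltW.
    have -> : dx * (s * w0 + s) = (dx * s) * (1 + w0) by ring.
    by rewrite ler_wpM2r // addr_ge0.
  move=> i hi; rewrite h_a //; case: ifP => [_|/negbT hne]; first by rewrite normr0.
  apply: (avg_bound hA hc_ub) => //; apply: hdSb; apply/andP; split; clear -hi; lia.
have lam0 : 0 < dt / dx by rewrite divr_gt0.
have step : forall n, P n -> P n.+1.
  move=> n Pn; have hb := hanb n Pn; case: Pn => hp hm.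
  have hbl : forall i : int, (0 <= i < Nx%:Z)%R ->
      - ((dt / dx) * c) <= (dt / dx) * an n i <= (dt / dx) * c.
    move=> i hi; have := hb i hi; rewrite ler_norml => /andP[h1 h2].
    by rewrite -mulrN !ler_pM2l // h1 h2.
  have hlc : 3 * ((dt / dx) * c) <= 2.
    by have -> : 3 * ((dt / dx) * c) = 3 * c * (dt / dx) by ring.
  split.
  - move=> i hi.
    have [->|i0] := eqVneq i 0; first by rewrite h_rhoL.
    have [->|iN] := eqVneq i Nx%:Z; first by rewrite h_rhoR.
    have hi' : (1 <= i < Nx%:Z)%R by apply/andP; split; clear -hi i0 iN; lia.
    have hi1 : (0 <= i < Nx%:Z)%R by apply/andP; split; clear -hi i0 iN; lia.
    have hi2 : (0 <= i - 1 < Nx%:Z)%R by apply/andP; split; clear -hi i0 iN; lia.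
    rewrite h_upd // (hJf n i) // (hJf n (i - 1)) // subrK.
    have r0 : 0 <= rho n (i - 1) by apply: hp; apply/andP; split; clear -hi'; lia.
    have r1 : 0 <= rho n i by apply: hp; apply/andP; split; clear -hi'; lia.
    have r2 : 0 <= rho n (i + 1) by apply: hp; apply/andP; split; clear -hi'; lia.
    have := hbl _ hi1; have := hbl _ hi2.
    set a1 := an n i; set a0 := an n (i - 1).
    move=> /andP[u1 u2] /andP[v1 v2].
    have -> : rho n i - (dt / dx) / 2 * (a1 * (rho n (i + 1) + rho n i) / 2
                  - a0 * (rho n i + rho n (i - 1)) / 2)
              + (dt / dx) / 2 * c * (rho n (i + 1) - 2 * rho n i + rho n (i - 1))
      = (1 - (dt / dx) * c - ((dt / dx) * a1) / 4 + ((dt / dx) * a0) / 4) * rho n i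
        + ((dt / dx) * c / 2 - ((dt / dx) * a1) / 4) * rho n (i + 1)
        + ((dt / dx) * c / 2 + ((dt / dx) * a0) / 4) * rho n (i - 1) by field.
    apply: addr_ge0; [apply: addr_ge0|]; apply: mulr_ge0 => //; clear -u1 u2 v1 v2 hlc; lra.
  - apply: le_trans hm; rewrite ler_pM2l //.
    case: (ltnP 0 Nx) => [Npos|N0]; last first.
      have -> : Nx = 0%N by clear -N0; lia.
      by rewrite !big_geq.
    rewrite !big_nat_recr //= !h_rhoR !addr0.
    pose G (j : int) := - ((dt / dx) / 2) * J n j + (dt / dx) / 2 * c * (rho n (j + 1) - rho n j).
    have hu : \sum_(1 <= k < Nx) rho n.+1 k%:Z =
              \sum_(1 <= k < Nx) (rho n k%:Z + (G k%:Z - G (k%:Z - 1))).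
      apply: eq_big_nat => k hk; rewrite h_upd; last by apply/andP; split; clear -hk; lia.
      rewrite /G subrK; ring.
    rewrite hu big_split /= gerDl.
    rewrite (@telescope_sumr_eq _ 1 Nx (fun j : nat => G (j%:Z - 1))); last 2 first.
    - by clear -Npos; lia.
    - by move=> k _; congr (G _ - _); clear; lia.
    rewrite subrr subr_le0.
    have hN1 : (0 <= Nx%:Z - 1 < Nx%:Z)%R by apply/andP; split; clear -Npos; lia.
    have h01 : (0 <= (0:int) < Nx%:Z)%R by apply/andP; split; clear -Npos; lia.
    rewrite /G (hJf n _ hN1) (hJf n _ h01) subrK h_rhoR add0r h_rhoL.
    have ra : 0 <= rho n (Nx%:Z - 1) by apply: hp; apply/andP; split; clear -Npos; lia.
    have rb : 0 <= rho n 1 by apply: hp; apply/andP; split; clear -Npos; lia.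
    have := hbl _ hN1; have := hbl _ h01.
    set b1 := an n (Nx%:Z - 1); set b0 := an n 0.
    move=> /andP[u1 u2] /andP[v1 v2].
    rewrite (_ : (0:int) + 1 = 1) //.
    have -> : - ((dt / dx) / 2) * (b1 * rho n (Nx%:Z - 1) / 2) +
                (dt / dx) / 2 * c * (0 - rho n (Nx%:Z - 1))
              = - (((dt / dx) * b1 / 4 + (dt / dx) * c / 2) * rho n (Nx%:Z - 1)) by field.
    have -> : - ((dt / dx) / 2) * (b0 * (rho n 1 + 0) / 2) + (dt / dx) / 2 * c * (rho n 1 - 0)
              = ((dt / dx) * c / 2 - (dt / dx) * b0 / 4) * rho n 1 by field.
    apply: (@le_trans _ _ 0).
      by rewrite oppr_le0 mulr_ge0 //; clear -u1 u2 v1 v2; lra.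
    by rewrite mulr_ge0 //; clear -u1 u2 v1 v2; lra.
have P0 : P 0%N.
  split.
  - move=> i hi.
    have [->|i0] := eqVneq i 0; first by rewrite h_rhoL.
    have [->|iN] := eqVneq i Nx%:Z; first by rewrite h_rhoR.
    rewrite h_rho0; last by apply/andP; split; clear -hi i0 iN; lia.
    by apply: divr_ge0; [apply: fine_ge0; exact: measure_ge0 | exact: ltW].
  - case: (ltnP 0 Nx) => [Npos|N0]; last first.
      have -> : Nx = 0%N by clear -N0; lia.
      by rewrite big_geq // mulr0.
    rewrite big_nat_recr //= h_rhoR addr0.
    rewrite (@eq_big_nat _ _ _ 1 Nx _
      (fun k : nat => fine (mu [set` `[gridpt x0 dx k%:Z, gridpt x0 dx (k%:Z + 1)[]) / dx)); last first.
      by move=> k hk; rewrite h_rho0 //; apply/andP; split; clear -hk; lia.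
    rewrite mulr_sumr.
    under eq_bigr do rewrite mulrC divfK //.
    exact: base_mass.
have hP : forall n, P n by elim=> [|n IH]; [exact: P0 | exact: step].
move=> n i; split; [exact: (hP n).1 | exact: hanb n (hP n) i].
Qed.
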